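(* Let $G$ be a dense $K_4^3\cup e$-free $3$-graph on $[n]$ with $\lambda(G)>\frac{\sqrt3}{18}$, in which $\{1,2,3,4\}$ spans a $K_4^3$, and let $\vec x$ be an optimum weight vector for $G$. Then for every $v\in[n]$, $\omega(G_v)\ge3$ and $x_v<1-\sqrt{\frac{\sqrt3}{3}\cdot\frac{\omega(G_v)}{\omega(G_v)-1}}$. Moreover, for every $v\in[n]\setminus\{1,2,3,4\}$, $3\le\omega(G_v)\le4$; consequently $x_v<0.0694$ if $\omega(G_v)=3$ and $x_v<0.12262$ if $\omega(G_v)=4$.
   Context: $K_4^3\cup e$ is the $3$-graph on $\{1,\dots,7\}$ with edges $\{123,124,134,234,567\}$. For a $3$-graph $G$ on $[n]$, $\lambda(G,\vec x)=\sum_{e\in E(G)}\prod_{i\in e}x_i$ and $\lambda(G)=\max\{\lambda(G,\vec x):\sum_ix_i=1,x_i\ge0\}$; an optimum weight vector is a maximizer. $G$ is dense if $\lambda(G')<\lambda(G)$ for every proper subgraph $G'$. The link graph $G_v$ of $v$ is the $2$-graph on $V(G)$ with edge set $\{e\setminus\{v\}: v\in e\in E(G)\}$, and $\omega(G_v)$ is the number of vertices of a maximum complete subgraph (clique) of $G_v$. *)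

(* Defs.v *)
From HB Require Import structures.
From mathcomp Require Import all_boot all_order all_algebra.
From mathcomp Require Import boolp classical_sets reals.
Set Implicit Arguments. Unset Strict Implicit. Unset Printing Implicit Defensive.
Import Order.TTheory GRing.Theory Num.Theory.
Local Open Scope ring_scope.

(* A 3-graph on [n] (vertices 'I_n, paper vertex k+1 = ordinal k) is a set of
   3-element vertex sets. *)
Definition uniform3 (n : nat) (G : {set {set 'I_n}}) : Prop :=
  forall e, e \in G -> #|e| = 3%N.

Definition lam (R : realType) (n : nat) (G : {set {set 'I_n}}) (x : 'I_n -> R) : R :=
  \sum_(e in G) \prod_(i in e) x i.

Definition simplex (R : realType) (n : nat) (S : {set 'I_n}) (x : 'I_n -> R) : Prop :=
  (forall i, 0 <= x i) /\ \sum_i x i = 1 /\ (forall i, i \notin S -> x i = 0).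

Definition lagr (R : realType) (n : nat) (S : {set 'I_n}) (G : {set {set 'I_n}}) : R :=
  sup [set lam G x | x in [set x | simplex S x]]%classic.

Definition lagrangian (R : realType) (n : nat) (G : {set {set 'I_n}}) : R :=
  lagr R [set: 'I_n] G.

Definition optimum (R : realType) (n : nat) (G : {set {set 'I_n}}) (x : 'I_n -> R) : Prop :=
  simplex [set: 'I_n] x /\ forall y, simplex [set: 'I_n] y -> lam G y <= lam G x.

Definition proper_subgraph (n : nat) (G : {set {set 'I_n}})
    (S : {set 'I_n}) (E : {set {set 'I_n}}) : Prop :=
  E \subset G /\ (forall e, e \in E -> e \subset S) /\ (S != [set: 'I_n] \/ E != G).

Definition dense (R : realType) (n : nat) (G : {set {set 'I_n}}) : Prop :=
  forall S E, proper_subgraph G S E -> lagr R S E < lagrangian R G.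

(* K_4^3 u e-free: no injective f : [7] -> [n] mapping
   123,124,134,234,567 onto edges of G. *)
Definition K43e_free (n : nat) (G : {set {set 'I_n}}) : Prop :=
  ~ exists f : 'I_7 -> 'I_n, injective f /\
     [set f (inord 0); f (inord 1); f (inord 2)] \in G /\
     [set f (inord 0); f (inord 1); f (inord 3)] \in G /\
     [set f (inord 0); f (inord 2); f (inord 3)] \in G /\
     [set f (inord 1); f (inord 2); f (inord 3)] \in G /\
     [set f (inord 4); f (inord 5); f (inord 6)] \in G.

Definition link_adj (n : nat) (G : {set {set 'I_n}}) (v a b : 'I_n) : bool :=
  [&& a != b & [set v; a; b] \in G].

Definition is_clique (n : nat) (G : {set {set 'I_n}}) (v : 'I_n) (K : {set 'I_n}) : bool :=
  [forall a in K, forall b in K, (a != b) ==> link_adj G v a b].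

Definition omega (n : nat) (G : {set {set 'I_n}}) (v : 'I_n) : nat :=
  \max_(K : {set 'I_n} | is_clique G v K) #|K|.

(* {1,2,3,4} (0-based: ordinals 0..3) spans a K_4^3 *)
Definition first4_K43 (n : nat) (G : {set {set 'I_n}}) : Prop :=
  forall i j k : 'I_n, (i < 4)%N -> (j < 4)%N -> (k < 4)%N ->
    i != j -> i != k -> j != k -> [set i; j; k] \in G.

(* Main.v *)
Require Import Defs.
From HB Require Import structures.
From mathcomp Require Import all_boot all_order all_algebra.
From mathcomp Require Import boolp classical_sets reals.
From mathcomp Require Import ring lra zify.
Import Order.TTheory GRing.Theory Num.Theory.
Local Open Scope ring_scope.
Set Implicit Arguments. Unset Strict Implicit.

Lemma sum_if_eq (R : realFieldType) (T : finType) (a : T) (f : T -> R) :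
  \sum_d (if d == a then f d else 0) = f a.
Proof. by rewrite (bigD1 a) //= eqxx big1 ?addr0 // => d /negbTE ->. Qed.

Definition Dg (R : realFieldType) (T : finType) (adj : rel T) (y : T -> R) c :=
  \sum_d (if adj c d then y d else 0).
Definition Fq (R : realFieldType) (T : finType) (adj : rel T) (y : T -> R) :=
  \sum_c y c * Dg adj y c.
Definition upd (R : realFieldType) (T : finType) (y : T -> R) a t :=
  fun c => y c + (if c == a then t else 0).

Lemma sum_upd (R : realFieldType) (T : finType) (y : T -> R) a t :
  \sum_c upd y a t c = \sum_c y c + t.
Proof. by rewrite /upd big_split /= (sum_if_eq a (fun _ => t)). Qed.

Lemma Dg_upd (R : realFieldType) (T : finType) (adj : rel T) (y : T -> R) a t c :
  Dg adj (upd y a t) c = Dg adj y c + (if adj c a then t else 0).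
Proof.
rewrite /Dg /upd -(sum_if_eq a (fun d => if adj c d then t else 0)) -big_split /=.
apply: eq_bigr => d _; case: (adj c d); case: (d == a) => //; rewrite ?addr0 //.
Qed.

Lemma Fq_upd (R : realFieldType) (T : finType) (adj : rel T) (y : T -> R) a t :
  (forall a b, adj a b = adj b a) -> (forall a, adj a a = false) ->
  Fq adj (upd y a t) = Fq adj y + 2 * t * Dg adj y a.
Proof.
move=> sym irr; rewrite /Fq.
under eq_bigr do rewrite Dg_upd.
rewrite (eq_bigr (fun c => y c * Dg adj y c + (y c * (if adj c a then t else 0)
   + (if c == a then t * (Dg adj y a + (if adj a a then t else 0)) else 0)))); last first.
  move=> c _; rewrite /upd; case: eqP => [->|_]; ring.
rewrite big_split /= big_split /= sum_if_eq irr addr0; congr (_ + _).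
rewrite /Dg mulr_sumr mulr_sumr. rewrite -big_split /=.
apply: eq_bigr => c _; rewrite sym; case: (adj a c); ring.
Qed.

Lemma Fq_le (R : realFieldType) (T : finType) (adj : rel T) (y : T -> R) :
  (forall a, adj a a = false) -> (forall i, 0 <= y i) ->
  Fq adj y <= (\sum_i y i) ^+ 2 - \sum_i y i ^+ 2.
Proof.
move=> irr y0.
have -> : (\sum_i y i) ^+ 2 - \sum_i y i ^+ 2 = \sum_c y c * (\sum_i y i - y c).
  rewrite expr2 mulr_suml -sumrB; apply: eq_bigr => c _; ring.
apply: ler_sum => c _; apply: ler_wpM2l => //.
rewrite /Dg (bigD1 c) //= irr add0r.
have -> : \sum_i y i - y c = \sum_(i | i != c) y i.
  by rewrite (bigD1 c) //=; ring.
apply: ler_sum => d _; case: (adj c d) => //.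
Qed.

Lemma CS (R : realFieldType) (T : finType) (A : {set T}) (y : T -> R) :
  (\sum_(i in A) y i) ^+ 2 <= #|A|%:R * \sum_(i in A) y i ^+ 2.
Proof.
have H : 0 <= \sum_(i in A) \sum_(j in A) (y i - y j) ^+ 2.
  by apply: sumr_ge0 => i _; apply: sumr_ge0 => j _; apply: sqr_ge0.
have E : \sum_(i in A) \sum_(j in A) (y i - y j) ^+ 2 =
   2 * (#|A|%:R * \sum_(i in A) y i ^+ 2) - 2 * (\sum_(i in A) y i) ^+ 2.
  have E1 : forall i, \sum_(j in A) (y i - y j) ^+ 2 =
     #|A|%:R * y i ^+ 2 - 2 * y i * \sum_(j in A) y j + \sum_(j in A) y j ^+ 2.
    move=> i; rewrite (eq_bigr (fun j => (y i ^+ 2 - 2 * y i * y j) + y j ^+ 2)); last by move=> j _; ring.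
    by rewrite big_split /= sumrB sumr_const mulr_sumr [#|A|%:R * _]mulr_natl.
  under eq_bigr do rewrite E1.
  rewrite big_split sumrB /= -mulr_sumr -mulr_suml -mulr_sumr sumr_const -mulr_natl expr2; ring.
lra.
Qed.

Definition supp (R : realFieldType) (T : finType) (y : T -> R) := [set i | y i != 0].

Lemma fin_alg (R : realFieldType) (w : nat) (F s q : R) :
  0 <= q -> s ^+ 2 <= w%:R * q -> F <= s ^+ 2 - q -> F <= (1 - w%:R^-1) * s ^+ 2.
Proof.
move=> q0 h1 h2; case: w h1 => [|w] h1.
  by rewrite invr0 subr0 mul1r; lra.
have wp : 0 < (w.+1)%:R :> R by rewrite ltr0n.
have : s ^+ 2 / (w.+1)%:R <= q by rewrite ler_pdivrMr // mulrC.
rewrite mulrBl mul1r [_^-1 * _]mulrC => h; apply: le_trans h2 _; by rewrite lerD2l lerN2.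
Qed.

Lemma MS_clique (R : realFieldType) (T : finType) (adj : rel T) (w : nat) (y : T -> R) :
  (forall a, adj a a = false) ->
  (forall K : {set T}, (forall a b, a \in K -> b \in K -> a != b -> adj a b) -> (#|K| <= w)%N) ->
  (forall i, 0 <= y i) ->
  [forall a in supp y, forall b in supp y, (a != b) ==> adj a b] ->
  Fq adj y <= (1 - w%:R^-1) * (\sum_i y i) ^+ 2.
Proof.
move=> irr cl y0 /forall_inP H.
have hK : (#|supp y| <= w)%N.
  apply: cl => a b aS bS ab; have /forall_inP := H a aS; move/(_ b bS).
  by rewrite ab.
have e1 : \sum_i y i = \sum_(i in supp y) y i.
  rewrite [RHS]big_mkcond; apply: eq_bigr => i _; rewrite inE.
  by case: eqP => // ->.
have e2 : \sum_i y i ^+ 2 = \sum_(i in supp y) y i ^+ 2.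
  rewrite [RHS]big_mkcond; apply: eq_bigr => i _; rewrite inE.
  by case: eqP => // ->; rewrite expr2 mulr0.
apply: (fin_alg (q := \sum_i y i ^+ 2)).
- by apply: sumr_ge0 => i _; apply: sqr_ge0.
- rewrite e1 e2; apply: le_trans (CS _ _) _; apply: ler_wpM2r.
    by apply: sumr_ge0 => i _; apply: sqr_ge0.
  by rewrite ler_nat.
- exact: Fq_le.
Qed.

Lemma MS (R : realFieldType) (T : finType) (adj : rel T) (w : nat) :
  (forall a b, adj a b = adj b a) -> (forall a, adj a a = false) ->
  (forall K : {set T}, (forall a b, a \in K -> b \in K -> a != b -> adj a b) -> (#|K| <= w)%N) ->
  forall y : T -> R, (forall i, 0 <= y i) ->
  Fq adj y <= (1 - w%:R^-1) * (\sum_i y i) ^+ 2.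
Proof.
move=> sym irr cl.
suff H : forall k (y : T -> R), (#|supp y| <= k)%N -> (forall i, 0 <= y i) ->
  Fq adj y <= (1 - w%:R^-1) * (\sum_i y i) ^+ 2.
  by move=> y; apply: (H _ y (leqnn _)).
elim=> [|k IH] y Hk y0;
  (have [clq|ncl] := boolP [forall a in supp y, forall b in supp y, (a != b) ==> adj a b];
    [exact: MS_clique|]);
  case/forall_inPn: ncl => a aS /forall_inPn [b bS]; rewrite negb_imply => /andP [ab nadj].
  by move: Hk; rewrite leqn0 => /eqP/cards0_eq Hs; move: aS; rewrite Hs inE.
wlog D : a b aS bS ab nadj / Dg adj y b <= Dg adj y a.
  move=> W; case: (lerP (Dg adj y b) (Dg adj y a)) => h.
    exact: (W a b).
  by apply: (W b a) => //; [rewrite eq_sym | rewrite sym | apply: ltW].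
pose y' := upd (upd y a (y b)) b (- y b).
have ba : adj b a = false by rewrite sym; apply/negbTE.
have EF : Fq adj y' = Fq adj y + 2 * y b * (Dg adj y a - Dg adj y b).
  by rewrite /y' Fq_upd // Fq_upd // Dg_upd ba; ring.
have ES : \sum_i y' i = \sum_i y i by rewrite /y' !sum_upd; ring.
have y'0 : forall i, 0 <= y' i.
  move=> i; rewrite /y' /upd; case: (eqVneq i b) => [->|ib].
    rewrite eq_sym (negbTE ab) addr0; lra.
  case: (eqVneq i a) => [->|ia]; last by rewrite addr0 addr0.
  by rewrite addr0; apply: addr_ge0.
have Hs : (#|supp y'| <= k)%N.
  have sub : supp y' \subset supp y :\ b.
    apply/fintype.subsetP => i; rewrite !inE /y' /upd.
    case: (eqVneq i b) => [->|ib].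
      by rewrite [b == a]eq_sym (negbTE ab) addr0 subrr eqxx.
    rewrite addr0; case: (eqVneq i a) => [->|ia]; first by move: aS; rewrite inE.
    by rewrite addr0.
  apply: leq_trans (subset_leq_card sub) _.
  by move: Hk; rewrite (cardsD1 b (supp y)) bS.
have := IH y' Hs y'0; rewrite ES EF => h.
have : 0 <= 2 * y b * (Dg adj y a - Dg adj y b).
  by apply: mulr_ge0; [apply: mulr_ge0 => // | rewrite subr_ge0].
lra.
Qed.

Lemma lam_ub (R : realType) n (S : {set 'I_n}) (E : {set {set 'I_n}}) (y : 'I_n -> R) (c : R) :
  simplex S y -> (forall z, simplex S z -> lam E z <= c) -> lam E y <= lagr R S E.
Proof.
move=> sy ub; apply: ub_le_sup; last by exists y.
by exists c => r [z zs <-]; apply: ub.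
Qed.

Lemma lagrangian_opt (R : realType) n (G : {set {set 'I_n}}) (x : 'I_n -> R) :
  optimum G x -> lagrangian R G = lam G x.
Proof.
move=> [sx opt]; apply/eqP; rewrite eq_le; apply/andP; split.
  by apply: ge_sup; [exists (lam G x), x | move=> r [z zs <-]; apply: opt].
by apply: (lam_ub (c := lam G x)).
Qed.

Lemma prod_ge0 (R : realType) n (e : {set 'I_n}) (y : 'I_n -> R) :
  (forall i, 0 <= y i) -> 0 <= \prod_(i in e) y i.
Proof. by move=> y0; apply: prodr_ge0 => i _. Qed.

Lemma prod_zero (R : realType) n (e : {set 'I_n}) (y : 'I_n -> R) b :
  b \in e -> y b = 0 -> \prod_(i in e) y i = 0.
Proof. by move=> be yb; rewrite (bigD1 b) //= yb mul0r. Qed.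

Lemma dense_contra (R : realType) n (G : {set {set 'I_n}}) (x y : 'I_n -> R) b :
  dense R G -> optimum G x -> simplex [set: 'I_n] y -> y b = 0 ->
  lam G x <= lam G y -> False.
Proof.
move=> D ox sy yb le.
pose S := [set~ b]; pose E := [set e in G | b \notin e].
have pr : proper_subgraph G S E.
  split; [|split].
  - by apply/fintype.subsetP => e; rewrite inE => /andP [].
  - move=> e; rewrite inE => /andP [_ be]; apply/fintype.subsetP => i ie.
    by rewrite !inE; apply: contraNneq be => <-.
  - left; apply/eqP => h; have : b \in S by rewrite h inE.
    by rewrite !inE eqxx.
have := D S E pr; rewrite (lagrangian_opt ox).
have split_lam : forall z : 'I_n -> R, lam G z =
    lam E z + \sum_(e in G | b \in e) \prod_(i in e) z i.
  move=> z; rewrite /lam [LHS](bigID (fun e : {set 'I_n} => b \notin e)) /=; congr (_ + _).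
    by apply: eq_bigl => e; rewrite inE.
  by apply: eq_bigl => e; rewrite negbK.
have yS : simplex S y.
  case: sy => [y0 [y1 _]]; split => //; split => // i; rewrite !inE negbK.
  by move/eqP ->.
have : lam E y <= lagr R S E.
  apply: (lam_ub (c := lam G x)) => // z [z0 [z1 zS]].
  have zT : simplex [set: 'I_n] z by split => //; split => // i; rewrite inE.
  apply: le_trans (proj2 ox z zT); rewrite (split_lam z) lerDl.
  by apply: sumr_ge0 => e _; apply: prod_ge0.
have : lam E y = lam G y.
  rewrite split_lam big1 ?addr0 // => e /andP [_ be]; exact: prod_zero be yb.
lra.
Qed.

Lemma x_pos (R : realType) n (G : {set {set 'I_n}}) (x : 'I_n -> R) v :
  dense R G -> optimum G x -> 0 < x v.
Proof.
move=> D ox; rewrite lt_neqAle; case: (ox) => [[x0 _] _]; rewrite x0 andbT.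
apply/negP => /eqP h; apply: (dense_contra D ox (proj1 ox) (esym h)); exact: lexx.
Qed.

Definition Mv (R : realType) n (G : {set {set 'I_n}}) (x : 'I_n -> R) v :=
  \sum_(e in G) (if v \in e then \prod_(i in e :\ v) x i else 0).

Lemma prod_const_mul (R : realType) n (A : {set 'I_n}) (c : R) (x : 'I_n -> R) :
  \prod_(i in A) (c * x i) = c ^+ #|A| * \prod_(i in A) x i.
Proof. by rewrite big_split /= prodr_const. Qed.

Lemma prod_scale (R : realType) n (e : {set 'I_n}) (x : 'I_n -> R) v (s : R) :
  #|e| = 3%N ->
  \prod_(i in e) ((1 + s) * x i - (if i == v then s else 0)) =
  (1 + s) ^+ 3 * \prod_(i in e) x i -
  (if v \in e then s * (1 + s) ^+ 2 * \prod_(i in e :\ v) x i else 0).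
Proof.
move=> e3; case: ifP => ve.
  have c2 : #|e :\ v| = 2%N by move: e3; rewrite (cardsD1 v e) ve => -[].
  rewrite (big_setD1 v ve) /= eqxx (big_setD1 v ve) /=.
  rewrite (eq_bigr (fun i => (1 + s) * x i)); last first.
    by move=> i; rewrite !inE => /andP [/negbTE -> _]; rewrite subr0.
  rewrite prod_const_mul c2; ring.
rewrite subr0 -e3 -prod_const_mul; apply: eq_bigr => i ie.
have -> : (i == v) = false by apply/negP => /eqP h; move: ie; rewrite h ve.
by rewrite subr0.
Qed.

Lemma lam_scale (R : realType) n (G : {set {set 'I_n}}) (x : 'I_n -> R) v (s : R) :
  uniform3 G ->
  lam G (fun i => (1 + s) * x i - (if i == v then s else 0)) =
  (1 + s) ^+ 3 * lam G x - s * (1 + s) ^+ 2 * Mv G x v.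
Proof.
move=> u3; rewrite /lam /Mv.
rewrite (eq_bigr _ (fun e eG => prod_scale x v s (u3 e eG))).
rewrite sumrB !mulr_sumr; congr (_ - _); apply: eq_bigr => e _.
by case: ifP => _; rewrite ?mulr0.
Qed.

Lemma Mv_ge0 (R : realType) n (G : {set {set 'I_n}}) (x : 'I_n -> R) v :
  (forall i, 0 <= x i) -> 0 <= Mv G x v.
Proof.
move=> x0; apply: sumr_ge0 => e _; case: ifP => // _; exact: prod_ge0.
Qed.

Lemma x_le1 (R : realType) n (x : 'I_n -> R) v :
  simplex [set: 'I_n] x -> x v <= 1.
Proof.
move=> [x0 [x1 _]]; rewrite -x1 (bigD1 v) //= lerDl.
by apply: sumr_ge0 => i _.
Qed.

Lemma KKT (R : realType) n (G : {set {set 'I_n}}) (x : 'I_n -> R) v :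
  uniform3 G -> dense R G -> optimum G x -> 3 * lam G x <= Mv G x v.
Proof.
move=> u3 D ox; have xv := x_pos v D ox.
have [[x0 [x1 _]] opt] := ox.
have xv1 := x_le1 v (proj1 ox).
have M0 := Mv_ge0 G v x0.
rewrite leNgt; apply/negP => H.
set L := lam G x in H *; set M := Mv G x v in H M0 *.
pose e := (3 * L - M) / (3 * L + 3 * M + 3).
have den : 0 < 3 * L + 3 * M + 3 by lra.
have e0 : 0 < e by apply: divr_gt0; lra.
have eE : e * (3 * L + 3 * M + 3) = 3 * L - M by rewrite /e mulfVK //; lra.
have e1 : e < 1.
  by rewrite /e ltr_pdivrMr // mul1r; lra.
pose s := x v * e.
have s0 : 0 < s by apply: mulr_gt0.
have sx : s <= x v by rewrite /s ler_piMr //; apply: ltW.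
have se : s <= e by rewrite /s ler_piMl //; apply: ltW.
have zs : simplex [set: 'I_n] (fun i => (1 + s) * x i - (if i == v then s else 0)).
  split; [|split].
  - move=> i; case: (eqVneq i v) => [->|_]; last by rewrite subr0 mulr_ge0 //; lra.
    have : s * x v <= s * 1 by rewrite ler_pM2l.
    nra.
  - rewrite sumrB -mulr_sumr x1 (sum_if_eq v (fun _ => s)); ring.
  - by move=> i; rewrite inE.
have := opt _ zs; rewrite lam_scale // -/L -/M => h.
have h2 : s * (L * (3 + 3 * s + s ^+ 2) - (1 + s) ^+ 2 * M) <= 0 by nra.
have h3 : L * (3 + 3 * s + s ^+ 2) - (1 + s) ^+ 2 * M <= 0.
  by move: h2; rewrite pmulr_rle0.
have h4 : (1 + s) ^+ 2 * M <= (1 + 3 * e) * M.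
  apply: ler_wpM2r => //; nra.
have h5 : 3 * e * M < 3 * L - M by nra.
have h6 : 0 <= L * (3 * s + s ^+ 2) by apply: mulr_ge0; nra.
nra.
Qed.

Lemma card3_distinct n (a b c : 'I_n) :
  #|[set a; b; c]| = 3%N -> [/\ a != b, a != c & b != c].
Proof.
move=> h; split; apply/negP => /eqP E; move: h; subst.
- have -> : [set b; b; c] = [set b; c].
    by apply/setP => i; rewrite !inE; case: (i == b); case: (i == c).
  by rewrite cards2; case: (b != c).
- have -> : [set c; b; c] = [set c; b].
    by apply/setP => i; rewrite !inE; case: (i == b); case: (i == c).
  by rewrite cards2; case: (c != b).
- have -> : [set a; c; c] = [set a; c].
    by apply/setP => i; rewrite !inE; case: (i == a); case: (i == c).
  by rewrite cards2; case: (a != c).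
Qed.

Lemma link_facts n (G : {set {set 'I_n}}) v a b :
  uniform3 G -> link_adj G v a b -> [/\ a != b, a != v & b != v].
Proof.
move=> u3 /andP [ab /u3 /card3_distinct [va vb _]].
by split => //; rewrite eq_sym.
Qed.

Lemma set3C n (v a b : 'I_n) : [set v; a; b] = [set v; b; a].
Proof. by apply/setP => i; rewrite !inE; case: (i == v); case: (i == a); case: (i == b). Qed.

Lemma link_sym n (G : {set {set 'I_n}}) v a b :
  link_adj G v a b = link_adj G v b a.
Proof. by rewrite /link_adj set3C eq_sym. Qed.

Lemma link_irr n (G : {set {set 'I_n}}) v a : link_adj G v a a = false.
Proof. by rewrite /link_adj eqxx. Qed.

Lemma inner_count (R : realType) n (G : {set {set 'I_n}}) (x : 'I_n -> R) v e :
  uniform3 G -> e \in G -> v \in e ->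
  \sum_(p | link_adj G v p.1 p.2 && ([set v; p.1; p.2] == e)) x p.1 * x p.2 =
  2 * \prod_(i in e :\ v) x i.
Proof.
move=> u3 eG ve.
have c2 : #|e :\ v| == 2%N by move: (u3 e eG); rewrite (cardsD1 v e) ve => -[]; rewrite add0n => ->.
case/cards2P: c2 => a0 [b0 [ab0 E]].
have a0v : a0 != v.
  have : a0 \in e :\ v by rewrite E !inE eqxx.
  by rewrite !inE => /andP [].
have b0v : b0 != v.
  have : b0 \in e :\ v by rewrite E !inE eqxx orbT.
  by rewrite !inE => /andP [].
have ee : e = [set v; a0; b0].
  apply/setP => i; rewrite !inE; case: (eqVneq i v) => [->|iv] //.
  have := E; move/setP/(_ i); rewrite !inE iv /= => ->; done.
have -> : \prod_(i in e :\ v) x i = x a0 * x b0.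
  by rewrite E big_setU1 /= ?big_set1 // inE.
rewrite (eq_bigl (fun p => (p == (a0, b0)) || (p == (b0, a0)))); last first.
  case=> a b /=; rewrite ee /link_adj.
  apply/idP/idP.
    case/andP => /andP [ab abG] /eqP E2.
    have := u3 _ abG; move/card3_distinct => [va vb _].
    have ha : a \in [set v; a0; b0] by rewrite -E2 !inE eqxx orbT.
    have hb : b \in [set v; a0; b0] by rewrite -E2 !inE eqxx !orbT.
    have av : (a == v) = false by rewrite eq_sym; apply/negbTE.
    have bv : (b == v) = false by rewrite eq_sym; apply/negbTE.
    move: ha hb; rewrite !inE av bv /=.
    rewrite !xpair_eqE.
    case/orP => /eqP ea; case/orP => /eqP eb; subst => //=; rewrite ?eqxx ?orbT //.
      by rewrite eqxx in ab.
    by rewrite eqxx in ab.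
  rewrite !xpair_eqE => /orP [] /andP [/eqP -> /eqP ->].
    by rewrite ab0 -ee eG eqxx.
  by rewrite eq_sym ab0 set3C -ee eG eqxx.
rewrite (bigD1 (a0, b0)) /= ?eqxx //.
rewrite (big_pred1 (b0, a0)) /=; first by rewrite mulrC; ring.
case=> a b /=; rewrite !xpair_eqE.
case: (eqVneq a b0) => [->|]; case: (eqVneq b a0) => [->|] //=; rewrite ?andbF ?andbT //.
  by rewrite eq_sym (negbTE ab0).
all: by move=> *; rewrite orbF andbN.
Qed.

Lemma Mv_Fq (R : realType) n (G : {set {set 'I_n}}) (x : 'I_n -> R) v :
  uniform3 G -> 2 * Mv G x v = Fq (link_adj G v) x.
Proof.
move=> u3.
have -> : Fq (link_adj G v) x =
    \sum_(p | link_adj G v p.1 p.2) x p.1 * x p.2.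
  rewrite /Fq /Dg.
  under eq_bigr do rewrite mulr_sumr.
  rewrite pair_big /= [RHS]big_mkcond /=; apply: eq_bigr => p _.
  by case: ifP; rewrite ?mulr0.
rewrite (partition_big (fun p => [set v; p.1; p.2]) (fun e => (e \in G) && (v \in e))); last first.
  by move=> [a b] /= /andP [_ abG]; rewrite abG !inE eqxx.
rewrite /Mv -big_mkcondr /= mulr_sumr; apply: eq_bigr => e /andP [eG ve].
by rewrite inner_count.
Qed.

Lemma clique_bound n (G : {set {set 'I_n}}) v (K : {set 'I_n}) :
  (forall a b, a \in K -> b \in K -> a != b -> link_adj G v a b) ->
  (#|K| <= omega G v)%N.
Proof.
move=> H; apply: (leq_bigmax_cond (F := fun K : {set 'I_n} => #|K|)).
by apply/forall_inP => a aK; apply/forall_inP => b bK; apply/implyP; apply: H.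
Qed.

Lemma Mv_bound (R : realType) n (G : {set {set 'I_n}}) (x : 'I_n -> R) v :
  uniform3 G -> (forall i, 0 <= x i) -> \sum_i x i = 1 ->
  2 * Mv G x v <= (1 - (omega G v)%:R^-1) * (1 - x v) ^+ 2.
Proof.
move=> u3 x0 x1; rewrite Mv_Fq //.
pose y := upd x v (- x v).
have yE : forall c, c != v -> y c = x c.
  by move=> c cv; rewrite /y /upd (negbTE cv) addr0.
have yv : y v = 0 by rewrite /y /upd eqxx subrr.
have -> : Fq (link_adj G v) x = Fq (link_adj G v) y.
  rewrite /Fq; apply: eq_bigr => c _.
  case: (eqVneq c v) => [->|cv].
    rewrite yv mul0r /Dg big1 ?mulr0 // => d _.
    by case: ifP => // /(link_facts u3) [_ /eqP].
  rewrite yE //; congr (_ * _); rewrite /Dg; apply: eq_bigr => d _.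
  by case: ifP => // /(link_facts u3) [_ _ dv]; rewrite yE.
have -> : 1 - x v = \sum_i y i by rewrite /y sum_upd x1.
apply: MS.
- exact: link_sym.
- exact: link_irr.
- exact: clique_bound.
- move=> i; case: (eqVneq i v) => [->|iv]; first by rewrite yv.
  by rewrite yE.
Qed.


Lemma omega_ge1 n (G : {set {set 'I_n}}) v : (1 <= omega G v)%N.
Proof.
have := @clique_bound n G v [set v]; rewrite cards1; apply.
by move=> a b; rewrite !inE => /eqP -> /eqP ->; rewrite eqxx.
Qed.

Lemma alg_w (R : realType) (W L q s : R) :
  3 <= W -> 6 * L <= (1 - W^-1) * q -> s / 3 < 6 * L ->
  s / 3 * (W / (W - 1)) < q.
Proof.
move=> W3 h1 h2.
have c0 : 0 < W / (W - 1) by apply: divr_gt0; lra.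
have Wn : W != 0 by apply/eqP => h; lra.
have Wn1 : W - 1 != 0 by apply/eqP => h; lra.
have e : q = (1 - W^-1) * q * (W / (W - 1)) by field; rewrite Wn1 Wn.
rewrite [in X in _ < X]e.
apply: lt_le_trans (_ : 6 * L * (W / (W - 1)) <= _).
  by rewrite ltr_pM2r.
by rewrite ler_pM2r.
Qed.

Lemma part1 (R : realType) n (G : {set {set 'I_n}}) (x : 'I_n -> R) v :
  uniform3 G -> dense R G -> optimum G x -> Num.sqrt 3 / 18 < lam G x ->
  (3 <= omega G v)%N /\
  Num.sqrt 3 / 3 * ((omega G v)%:R / ((omega G v)%:R - 1)) < (1 - x v) ^+ 2.
Proof.
move=> u3 D ox lam0.
have h1 := KKT v u3 D ox.
have [[x0 [x1 _]] _] := ox.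
have h2 := Mv_bound v u3 x0 x1.
have xv := x_pos v D ox.
have xv1 := x_le1 v (proj1 ox).
have s0 : 0 <= Num.sqrt 3 :> R by apply: sqrtr_ge0.
have s2 : Num.sqrt 3 ^+ 2 = 3 :> R by rewrite sqr_sqrtr // ler0n.
have s15 : 3 / 2 < Num.sqrt 3 :> R.
  rewrite ltNge; apply/negP => h.
  have : Num.sqrt 3 * Num.sqrt 3 <= 3 / 2 * (3 / 2) :> R by apply: ler_pM.
  rewrite -expr2 s2; lra.
have hq : 6 * lam G x <= (1 - (omega G v)%:R^-1) * (1 - x v) ^+ 2.
  clear -h1 h2; lra.
move: hq (omega_ge1 G v); clear h2; case: (omega G v) => [|[|[|k]]] // hq _.
- move: hq; rewrite invr1 subrr mul0r => hq; clear -hq lam0 s0; lra.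
- exfalso; move: hq; have -> : (1 - 2%:R^-1 : R) = 1 / 2 by field.
  have : (1 - x v) ^+ 2 <= 1.
    rewrite expr2; have : 0 <= 1 - x v <= 1 by lra.
    case/andP => a b; have := ler_pM a a b b; rewrite mul1r; done.
  move=> A B; clear -A B lam0 s15; lra.
split => //; apply: (alg_w (L := lam G x)) => //.
  by rewrite (ler_nat R 3 k.+3).
clear -lam0; lra.
Qed.

Lemma prod_transfer (R : realType) n (e : {set 'I_n}) (x : 'I_n -> R) a b (t : R) :
  a != b -> ~~ ((a \in e) && (b \in e)) ->
  \prod_(i in e) upd (upd x a t) b (- t) i =
  \prod_(i in e) x i + t * ((if a \in e then \prod_(i in e :\ a) x i else 0)
                         - (if b \in e then \prod_(i in e :\ b) x i else 0)).
Proof.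
move=> ab nab; rewrite /upd.
case: (boolP (a \in e)) => ae; case: (boolP (b \in e)) => be //=.
- by move: nab; rewrite ae be.
- rewrite (big_setD1 a ae) [in RHS](big_setD1 a ae) /= eqxx (negbTE ab).
  rewrite (eq_bigr x); first by ring.
  move=> i; rewrite !inE => /andP [ia ie].
  have -> : (i == b) = false by apply/negP => /eqP h; move: be; rewrite -h ie.
  by rewrite (negbTE ia) !addr0.
- rewrite (big_setD1 b be) [in RHS](big_setD1 b be) /= eqxx eq_sym (negbTE ab).
  rewrite (eq_bigr x); first by ring.
  move=> i; rewrite !inE => /andP [ib ie].
  have -> : (i == a) = false by apply/negP => /eqP h; move: ae; rewrite -h ie.
  by rewrite (negbTE ib) !addr0.
- rewrite subrr mulr0 addr0; apply: eq_bigr => i ie.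
  have -> : (i == a) = false by apply/negP => /eqP h; move: ae; rewrite -h ie.
  have -> : (i == b) = false by apply/negP => /eqP h; move: be; rewrite -h ie.
  by rewrite !addr0.
Qed.

Lemma pair_cover (R : realType) n (G : {set {set 'I_n}}) (x : 'I_n -> R) a b :
  dense R G -> optimum G x -> a != b ->
  exists2 e, e \in G & (a \in e) && (b \in e).
Proof.
move=> D ox ab; case: (boolP [exists e in G, (a \in e) && (b \in e)]) => [/exists_inP //|/exists_inPn H]; exfalso.
have [[x0 [x1 _]] opt] := ox.
have lamT : forall t, lam G (upd (upd x a t) b (- t)) =
    lam G x + t * (Mv G x a - Mv G x b).
  move=> t; rewrite /lam /Mv (eq_bigr _ (fun e eG => prod_transfer x t ab (H e eG))).
  by rewrite big_split /= -mulr_sumr sumrB.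
have sT : forall t, 0 <= x a + t -> 0 <= x b - t ->
    simplex [set: 'I_n] (upd (upd x a t) b (- t)).
  move=> t h1 h2; split; [|split].
  - move=> i; rewrite /upd; case: (eqVneq i a) => [->|ia].
      by rewrite (negbTE ab) addr0.
    case: (eqVneq i b) => [eib|ib]; last by rewrite !addr0.
    by subst i; rewrite addr0.
  - by rewrite !sum_upd x1; ring.
  - by move=> i; rewrite inE.
case: (lerP (Mv G x b) (Mv G x a)) => hM.
  apply: (dense_contra D ox (sT (x b) _ _) (b := b)).
  - by apply: addr_ge0.
  - by rewrite subrr.
  - by rewrite /upd eqxx eq_sym (negbTE ab) addr0 subrr.
  rewrite lamT lerDl; apply: mulr_ge0 => //; by rewrite subr_ge0.
apply: (dense_contra D ox (sT (- x a) _ _) (b := a)).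
- by rewrite subrr.
- by rewrite opprK; apply: addr_ge0.
- by rewrite /upd eqxx (negbTE ab) addr0 subrr.
rewrite lamT lerDl; apply: mulr_le0; first by rewrite oppr_le0.
by rewrite subr_le0 ltW.
Qed.

Lemma part1b (R : realType) n (G : {set {set 'I_n}}) (x : 'I_n -> R) v :
  uniform3 G -> dense R G -> optimum G x -> Num.sqrt 3 / 18 < lam G x ->
  x v < 1 - Num.sqrt (Num.sqrt 3 / 3 * ((omega G v)%:R / ((omega G v)%:R - 1))).
Proof.
move=> u3 D ox l0; have [w3 h] := part1 v u3 D ox l0.
have xv1 := x_le1 v (proj1 ox).
set a := _ * _ in h *.
have a0 : 0 < a.
  apply: mulr_gt0; first by apply: divr_gt0 => //; rewrite sqrtr_gt0 ltr0n.
  apply: divr_gt0; first by rewrite ltr0n; case: (omega G v) w3.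
  by rewrite subr_gt0 ltr1n; case: (omega G v) w3 => [|[|]].
have : Num.sqrt a < Num.sqrt ((1 - x v) ^+ 2) by rewrite ltr_sqrt //; apply: lt_trans h.
rewrite sqrtr_sqr ger0_norm; last by rewrite subr_ge0.
lra.
Qed.

Lemma omega_le n (G : {set {set 'I_n}}) v :
  uniform3 G -> (2 <= n)%N -> (omega G v <= n.-1)%N.
Proof.
move=> u3 n2; apply/bigmax_leqP => K /forall_inP Kc.
have adjK : forall a b, a \in K -> b \in K -> a != b -> link_adj G v a b.
  by move=> a b aK bK ab; have /forall_inP := Kc a aK; move/(_ b bK); rewrite ab.
case: (boolP (v \in K)) => vK.
  have : K \subset [set v].
    apply/fintype.subsetP => b bK; rewrite inE; apply/negPn/negP => bv.
    have vb : v != b by rewrite eq_sym.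
    by case: (link_facts u3 (adjK v b vK bK vb)); rewrite eqxx.
  move/subset_leq_card; rewrite cards1 => h; apply: leq_trans h _; lia.
have : K \subset [set~ v].
  by apply/fintype.subsetP => b bK; rewrite !inE; apply: contraNneq vK => <-.
by move/subset_leq_card; rewrite cardsC1 card_ord.
Qed.

Lemma no_config n (G : {set {set 'I_n}}) (p0 p1 p2 p3 p4 p5 p6 : 'I_n) e :
  K43e_free G -> uniq [:: p0; p1; p2; p3; p4; p5; p6] ->
  [set p0; p1; p2] \in G -> [set p0; p1; p3] \in G ->
  [set p0; p2; p3] \in G -> [set p1; p2; p3] \in G ->
  e \in G -> (forall i, (i \in e) = [|| i == p4, i == p5 | i == p6]) -> False.
Proof.
move=> F u h1 h2 h3 h4 eG He; apply: F.
pose s := [:: p0; p1; p2; p3; p4; p5; p6].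
exists (fun i : 'I_7 => nth p0 s i); split.
  move=> i j /eqP; rewrite (@nth_uniq _ p0 s i j (ltn_ord i) (ltn_ord j) u).
  by move/eqP; apply: val_inj.
have E : e = [set p4; p5; p6] by apply/setP => i; rewrite He !inE orbA.
rewrite E in eG.
rewrite !inordK //=; by do !split.
Qed.

Lemma sqrt3_gt (R : realType) (c : R) : 0 <= c -> c ^+ 2 < 3 -> c < Num.sqrt 3.
Proof.
move=> c0 h; have s0 : 0 <= Num.sqrt 3 :> R by apply: sqrtr_ge0.
have s2 : Num.sqrt 3 ^+ 2 = 3 :> R by rewrite sqr_sqrtr // ler0n.
rewrite ltNge; apply/negP => h'.
have := ler_pM s0 s0 h' h'; rewrite -!expr2 s2; lra.
Qed.

Lemma n_ge7 (R : realType) n (G : {set {set 'I_n}}) (x : 'I_n -> R) :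
  (4 <= n)%N -> uniform3 G -> dense R G -> optimum G x ->
  Num.sqrt 3 / 18 < lam G x -> (7 <= n)%N.
Proof.
move=> n4 u3 D ox l0; rewrite leqNgt; apply/negP => n6.
have s53 : 5 / 3 < Num.sqrt 3 :> R by apply: sqrt3_gt; lra.
have xs : forall v, x v < 1 / 6.
  move=> v; have [w3 h] := part1 v u3 D ox l0.
  have wle : (omega G v <= 5)%N.
    apply: leq_trans (omega_le v u3 _) _; lia.
  move: h; set W := (omega G v)%:R => h.
  have W3 : 3 <= W by rewrite /W (ler_nat R 3).
  have W5 : W <= 5 by rewrite /W (ler_nat R _ 5).
  have c : 5 / 4 <= W / (W - 1) by rewrite ler_pdivlMr; lra.
  have c2 : 25 / 36 < Num.sqrt 3 / 3 * (W / (W - 1)).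
    apply: lt_le_trans (_ : Num.sqrt 3 / 3 * (5 / 4) <= _); first lra.
    by apply: ler_wpM2l => //; apply: divr_ge0 => //; apply: sqrtr_ge0.
  have xv1 := x_le1 v (proj1 ox).
  rewrite ltNge; apply/negP => hx.
  have a : 0 <= 1 - x v by lra.
  have b : 1 - x v <= 5 / 6 by lra.
  have := ler_pM a a b b; rewrite -expr2; lra.
have [[_ [x1 _]] _] := ox.
have : \sum_i x i < \sum_(i : 'I_n) (1 / 6 : R).
  apply: ltr_sum; last by move=> i _; apply: xs.
  by apply/hasP; exists (Ordinal (leq_trans (isT : (0 < 4)%N) n4)); rewrite ?mem_index_enum.
rewrite x1 sumr_const card_ord => h.
have : (n%:R : R) <= 6 by rewrite (ler_nat R n 6); lia.
move: h; rewrite -mulr_natl; lra.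
Qed.

Ltac uniq_tac := rewrite -(map_inj_uniq val_inj) /= !inE !negb_or;
  repeat (apply/andP; split); lia.

Lemma cardU_le (T : finType) (A B : {set T}) : (#|A :|: B| <= #|A| + #|B|)%N.
Proof. by rewrite cardsU leq_subr. Qed.

Lemma omega_le4 (R : realType) n (G : {set {set 'I_n}}) (x : 'I_n -> R) (v : 'I_n) :
  (7 <= n)%N -> uniform3 G -> dense R G -> optimum G x -> K43e_free G ->
  first4_K43 G -> (4 <= v)%N -> (omega G v <= 4)%N.
Proof.
move=> n7 u3 D ox F f4 v4.
rewrite leqNgt; apply/negP => w5.
have cl0 : is_clique G v (finset.set0 : {set 'I_n}) by apply/forall_inP => a; rewrite inE.
case: (arg_maxnP (fun K : {set 'I_n} => #|K|) cl0) => K Kcl Kmax.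
have Kbig : (5 <= #|K|)%N.
  by apply: leq_trans w5 _; apply/bigmax_leqP => K' H; apply: Kmax.
have Kadj : forall a b, a \in K -> b \in K -> a != b -> link_adj G v a b.
  move: Kcl => /forall_inP Kc.
  by move=> a b aK bK ab; have /forall_inP := Kc a aK; move/(_ b bK); rewrite ab.
have h0 : (0 < n)%N by lia.
have h1 : (1 < n)%N by lia.
have h2 : (2 < n)%N by lia.
have h3 : (3 < n)%N by lia.
have h4 : (4 < n)%N by lia.
have h5 : (5 < n)%N by lia.
have h6 : (6 < n)%N by lia.
pose o0 := Ordinal h0; pose o1 := Ordinal h1; pose o2 := Ordinal h2; pose o3 := Ordinal h3.
pose o4 := Ordinal h4; pose o5 := Ordinal h5; pose o6 := Ordinal h6.
pose U4 := [set o0; o1; o2; o3].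
have memU4 : forall i, (i \in U4) = (i < 4)%N.
  by move=> i; rewrite !inE -!val_eqE /=; lia.
have f4' : forall i j k : 'I_n, (i < 4)%N -> (j < 4)%N -> (k < 4)%N ->
    (nat_of_ord i != nat_of_ord j) -> (nat_of_ord i != nat_of_ord k) -> (nat_of_ord j != nat_of_ord k) -> [set i; j; k] \in G.
  by move=> i j k hi hj hk ij ik jk; apply: f4; rewrite -?val_eqE.
have triK : forall i j, i \in K -> j \in K -> i != j -> [set v; i; j] \in G.
  by move=> i j iK jK ij; case/andP: (Kadj i j iK jK ij).
have cU4 : (#|U4| <= 4)%N.
  have := cardU_le [set o0; o1; o2] [set o3].
  have := cardU_le [set o0; o1] [set o2].
  have := cardU_le [set o0] [set o1].
  rewrite /U4 !cards1; lia.
case: (boolP (U4 \subset K)) => [sub | /subsetPn [m mU mK]]; last first.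
  pose K' := [set i in K | (4 <= i)%N].
  have KK : K \subset K' :|: (U4 :\ m).
    apply/fintype.subsetP => i iK; rewrite finset.in_setU finset.in_setD1 memU4 inE iK /=.
    have im : i != m by apply: contraNneq mK => <-.
    rewrite im /=; lia.
  have cU4m : (#|U4 :\ m| <= 3)%N by move: cU4; rewrite (cardsD1 m U4) mU; lia.
  have cK' : (2 <= #|K'|)%N.
    have h := leq_trans Kbig (leq_trans (subset_leq_card KK) (cardU_le K' (U4 :\ m))).
    have := leq_trans h (leq_add (leqnn #|K'|) cU4m); lia.
  have [a aK'] : exists a, a \in K' by apply/set0Pn; rewrite -card_gt0; lia.
  have [b bK'] : exists b, b \in K' :\ a.
    apply/set0Pn; rewrite -card_gt0; move: cK'; rewrite (cardsD1 a K') aK'; lia.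
  move: bK'; rewrite !inE => /and3P [ba bK b4].
  move: aK'; rewrite inE => /andP [aK a4].
  have ab : a != b by rewrite eq_sym.
  have L := Kadj a b aK bK ab.
  have [_ av bv] := link_facts u3 L.
  have avN : nat_of_ord a != nat_of_ord v by rewrite val_eqE.
  have bvN : nat_of_ord b != nat_of_ord v by rewrite val_eqE.
  have abN : nat_of_ord a != nat_of_ord b by rewrite val_eqE.
  apply: (@no_config n G o0 o1 o2 o3 v a b [set v; a; b] F).
  - by clear -v4 a4 b4 avN bvN abN; uniq_tac.
  - by apply: f4.
  - by apply: f4.
  - by apply: f4.
  - by apply: f4.
  - by case/andP: L.
  - by move=> i; rewrite !inE; case: (i == v); case: (i == a).
have triU : forall i j : 'I_n, (i < 4)%N -> (j < 4)%N -> (nat_of_ord i != nat_of_ord j) -> [set v; i; j] \in G.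
  move=> i j hi hj ij; apply: triK; rewrite ?val_eqE //.
    by apply: (fintype.subsetP sub); rewrite memU4.
  by apply: (fintype.subsetP sub); rewrite memU4.
have [a [w /and5P [a4 w4 avN wvN awN]]] : exists a w : 'I_n,
    [&& (4 <= a)%N, (4 <= w)%N, nat_of_ord a != nat_of_ord v, nat_of_ord w != nat_of_ord v & nat_of_ord a != nat_of_ord w].
  case: (eqVneq (nat_of_ord v) 4%N) => e4; first by exists o5, o6; rewrite /=; lia.
  case: (eqVneq (nat_of_ord v) 5%N) => e5; first by exists o4, o6; rewrite /=; lia.
  by exists o4, o5; rewrite /=; lia.
have aw : a != w by rewrite -val_eqE.
have [e eG /andP [ae we]] := pair_cover D ox aw.
have wea : w \in e :\ a by rewrite !inE we andbT -val_eqE eq_sym.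
have c1 : #|e :\ a :\ w| == 1%N.
  have := u3 e eG; rewrite (cardsD1 a e) ae (cardsD1 w (e :\ a)) wea => -[] h.
  by apply/eqP; move: h; rewrite add0n.
case/cards1P: c1 => z Hz.
have He : forall i, (i \in e) = [|| i == a, i == w | i == z].
  move=> i; have := Hz; move/setP/(_ i); rewrite !inE.
  case: (eqVneq i a) => [->|ia]; first by rewrite ae.
  case: (eqVneq i w) => [->|iw]; first by rewrite we; case: (w == a).
  by rewrite /= => ->.
have := Hz; move/setP/(_ z); rewrite !inE eqxx => /and3P [zw za _].
have zaN : nat_of_ord z != nat_of_ord a by rewrite val_eqE.
have zwN : nat_of_ord z != nat_of_ord w by rewrite val_eqE.
have caseV : forall i j k : 'I_n, (i < 4)%N -> (j < 4)%N -> (k < 4)%N ->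
    nat_of_ord i != nat_of_ord j -> nat_of_ord i != nat_of_ord k -> nat_of_ord j != nat_of_ord k ->
    uniq [:: v; i; j; k; a; w; z] -> False.
  move=> i j k hi hj hk ij ik jk u.
  apply: (@no_config n G v i j k a w z e F u) => //.
  - by apply: triU.
  - by apply: triU.
  - by apply: triU.
  - by apply: f4'.
case: (ltnP (nat_of_ord z) 4) => z4.
  case: (eqVneq (nat_of_ord z) 0%N) => e0.
    by apply: (caseV o1 o2 o3) => //; clear -v4 a4 w4 avN wvN awN zaN zwN e0; uniq_tac.
  case: (eqVneq (nat_of_ord z) 1%N) => e1.
    by apply: (caseV o0 o2 o3) => //; clear -v4 a4 w4 avN wvN awN zaN zwN e1; uniq_tac.
  case: (eqVneq (nat_of_ord z) 2%N) => e2.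
    by apply: (caseV o0 o1 o3) => //; clear -v4 a4 w4 avN wvN awN zaN zwN e2; uniq_tac.
  by apply: (caseV o0 o1 o2) => //; clear -v4 a4 w4 avN wvN awN zaN zwN e0 e1 e2 z4; uniq_tac.
case: (eqVneq (nat_of_ord z) (nat_of_ord v)) => zv.
  apply: (@no_config n G o0 o1 o2 o3 a w z e F) => //.
  - by clear -v4 a4 w4 awN zaN zwN zv; uniq_tac.
  - by apply: f4.
  - by apply: f4.
  - by apply: f4.
  - by apply: f4.
by apply: (caseV o0 o1 o2) => //; clear -v4 a4 w4 avN wvN awN zaN zwN zv z4; uniq_tac.
Qed.

Lemma sqrt_ge (R : realType) (a b : R) : 0 <= b -> b ^+ 2 <= a -> b <= Num.sqrt a.
Proof.
move=> b0 h; rewrite -(ger0_norm b0) -sqrtr_sqr; exact: ler_wsqrtr.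
Qed.

Lemma big_lit (R : realFieldType) : (100000%:R : R) = 100%:R * 1000%:R.
Proof. by rewrite -natrM. Qed.

Unset Implicit Arguments.

Theorem claim5p3 (R : realType) (n : nat) (G : {set {set 'I_n}}) (x : 'I_n -> R) :
  (4 <= n)%N ->
  uniform3 G ->
  dense R G ->
  K43e_free G ->
  lagrangian R G > Num.sqrt 3 / 18 ->
  first4_K43 G ->
  optimum G x ->
  (forall v : 'I_n,
     (3 <= omega G v)%N /\
     x v < 1 - Num.sqrt (Num.sqrt 3 / 3 * ((omega G v)%:R / ((omega G v)%:R - 1)))) /\
  (forall v : 'I_n, (4 <= v)%N ->
     [/\ (3 <= omega G v <= 4)%N,
         omega G v = 3%N -> x v < 694%:R / 10000%:R
       & omega G v = 4%N -> x v < 12262%:R / 100000%:R]).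
Proof.
move=> n4 u3 D F l0 f4 ox.
rewrite (lagrangian_opt ox) in l0.
split.
  move=> v; split; first exact: (part1 v u3 D ox l0).1.
  exact: part1b.
move=> v v4.
have n7 := n_ge7 n4 u3 D ox l0.
have w3 := (part1 v u3 D ox l0).1.
have w4 := omega_le4 n7 u3 D ox F f4 v4.
have hx := part1b v u3 D ox l0.
have s0 : 0 <= Num.sqrt 3 :> R by apply: sqrtr_ge0.
split; first by rewrite w3 w4.
- move=> e3; move: hx; rewrite e3.
  have hs : 2 * (9306 / 10000) ^+ 2 < Num.sqrt 3 :> R by apply: sqrt3_gt; lra.
  have : 9306 / 10000 <= Num.sqrt (Num.sqrt 3 / 3 * (3%:R / (3%:R - 1))) :> R.
    apply: sqrt_ge; first lra.
    have -> : (3%:R - 1 : R) = 2 by lra.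
    lra.
  lra.
- move=> e4; move: hx; rewrite e4 big_lit.
  pose b : R := 1 - 12262%:R / (100%:R * 1000%:R).
  have hs : 9 / 4 * b ^+ 2 < Num.sqrt 3 :> R by apply: sqrt3_gt; rewrite /b; lra.
  have : b <= Num.sqrt (Num.sqrt 3 / 3 * (4%:R / (4%:R - 1))) :> R.
    apply: sqrt_ge; first by rewrite /b; lra.
    have -> : (4%:R - 1 : R) = 3 by lra.
    move: hs; rewrite /b; lra.
  rewrite /b; lra.
Qed.
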